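(* Let three binary classifiers $i,j,k$ be error independent on a test with $Q_a,Q_b\ge1$. Define from the observed frequencies $f_{b_i}=f_{baa}+f_{bab}+f_{bba}+f_{bbb}$, $f_{b_j}=f_{aba}+f_{abb}+f_{bba}+f_{bbb}$, $f_{b_k}=f_{aab}+f_{abb}+f_{bab}+f_{bbb}$, $\Delta_{i,j}=f_{bba}+f_{bbb}-f_{b_i}f_{b_j}$, $\Delta_{i,k}=f_{bab}+f_{bbb}-f_{b_i}f_{b_k}$, $\Delta_{j,k}=f_{abb}+f_{bbb}-f_{b_j}f_{b_k}$, $\Delta_{i,j,k}=f_{bbb}-\big(f_{b_i}f_{b_j}f_{b_k}+f_{b_i}\Delta_{j,k}+f_{b_j}\Delta_{i,k}+f_{b_k}\Delta_{i,j}\big)$. Set $\alpha=\Delta_{i,j,k}^2+4\Delta_{i,j}\Delta_{i,k}\Delta_{j,k}$ and $\gamma=\Delta_{i,j}\Delta_{i,k}\Delta_{j,k}$. Then the true prevalence $p_a$ satisfies $\alpha p_a^2-\alpha p_a+\gamma=0$; moreover, if $\alpha\neq 0$, the two roots of $\alpha x^2-\alpha x+\gamma$ are exactly $p_a$ and $p_b=1-p_a$.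
   Context: Test of $Q$ items with true labels $t_q\in\{a,b\}$; $Q_\ell=\#\{q:t_q=\ell\}$, $p_\ell=Q_\ell/Q$. Classifier $c\in\{i,j,k\}$ labels item $q$ with $\ell^q_c\in\{a,b\}$; label accuracy $p_{c,\ell}=\frac1{Q_\ell}\#\{q:\ell^q_c=\ell,t_q=\ell\}$. $f_{\ell_i\ell_j\ell_k}=\frac1Q\#\{q:\ell^q_i=\ell_i,\ell^q_j=\ell_j,\ell^q_k=\ell_k\}$. Pair error correlation $\Gamma_{c,d;\ell}=\frac1{Q_\ell}\sum_q(\mathbf 1[\ell^q_c=\ell]-p_{c,\ell})(\mathbf 1[\ell^q_d=\ell]-p_{d,\ell})\mathbf 1[t_q=\ell]$; 3-way error correlation $\Gamma_{i,j,k;\ell}=\frac1{Q_\ell}\sum_q\prod_{c\in\{i,j,k\}}(\mathbf 1[\ell^q_c=\ell]-p_{c,\ell})\,\mathbf 1[t_q=\ell]$. Error independence means all pair and 3-way correlations vanish for both labels $\ell\in\{a,b\}$. *)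

(* Defs.v *)
From mathcomp Require Import all_boot all_order all_algebra.
Set Implicit Arguments. Unset Strict Implicit. Unset Printing Implicit Defensive.
Import Order.TTheory GRing.Theory Num.Theory.
Local Open Scope ring_scope.

Definition la : bool := true.
Definition lb : bool := false.

Section Defs.
Variables (R : realFieldType) (Q : nat).
(* t q : true label of item q;  a classifier c labels item q with c q. *)
Variable t : 'I_Q -> bool.

Definition Qlab (l : bool) : nat := #|[set q | t q == l]|.

Definition prevalence (l : bool) : R := (Qlab l)%:R / Q%:R.

Definition lacc (c : 'I_Q -> bool) (l : bool) : R :=
  #|[set q | (c q == l) && (t q == l)]|%:R / (Qlab l)%:R.

Definition ind (c : 'I_Q -> bool) (l : bool) (q : 'I_Q) : R :=
  if c q == l then 1 else 0.

Definition Gamma2 (c d : 'I_Q -> bool) (l : bool) : R :=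
  (Qlab l)%:R^-1 *
  \sum_(q < Q) (ind c l q - lacc c l) * (ind d l q - lacc d l)
                * (if t q == l then 1 else 0).

Definition Gamma3 (c d e : 'I_Q -> bool) (l : bool) : R :=
  (Qlab l)%:R^-1 *
  \sum_(q < Q) (ind c l q - lacc c l) * (ind d l q - lacc d l)
                * (ind e l q - lacc e l) * (if t q == l then 1 else 0).

Definition error_independent (ci cj ck : 'I_Q -> bool) : Prop :=
  forall l : bool,
    [/\ Gamma2 ci cj l = 0, Gamma2 ci ck l = 0, Gamma2 cj ck l = 0
      & Gamma3 ci cj ck l = 0].
End Defs.

Section Freq.
Variables (R : realFieldType) (Q : nat).
Definition freq (ci cj ck : 'I_Q -> bool) (x y z : bool) : R :=
  #|[set q | [&& ci q == x, cj q == y & ck q == z]]|%:R / Q%:R.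
End Freq.

(* Main.v *)
Require Import Defs.
From mathcomp Require Import all_boot all_order all_algebra.
From mathcomp Require Import ring.
Import Order.TTheory GRing.Theory Num.Theory.
Local Open Scope ring_scope.

Section Helpers.
Set Implicit Arguments. Unset Strict Implicit. Unset Printing Implicit Defensive.

Lemma card_sumR (R : pzRingType) (T : finType) (P : pred T) :
  (#|[set x | P x]|%:R : R) = \sum_x (if P x then 1 else 0).
Proof.
rewrite -sum1_card natr_sum big_mkcond /=; apply: eq_bigr => x _.
by rewrite inE; case: (P x).
Qed.

Lemma L3 (R : comPzRingType) (I : finType) (e1 e2 e3 w : I -> R)
  (n b1 b2 b3 s1 s2 s3 : R) :
  \sum_q w q = n ->
  \sum_q e1 q * w q = 0 -> \sum_q e2 q * w q = 0 -> \sum_q e3 q * w q = 0 ->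
  \sum_q e1 q * e2 q * w q = 0 -> \sum_q e1 q * e3 q * w q = 0 ->
  \sum_q e2 q * e3 q * w q = 0 -> \sum_q e1 q * e2 q * e3 q * w q = 0 ->
  \sum_q (b1 + s1 * e1 q) * (b2 + s2 * e2 q) * (b3 + s3 * e3 q) * w q
   = n * b1 * b2 * b3.
Proof.
move=> H0 H1 H2 H3 H12 H13 H23 H123.
rewrite (eq_bigr (fun q => b1 * b2 * b3 * w q + b1 * b2 * s3 * (e3 q * w q)
  + b1 * s2 * b3 * (e2 q * w q) + s1 * b2 * b3 * (e1 q * w q)
  + b1 * s2 * s3 * (e2 q * e3 q * w q) + s1 * b2 * s3 * (e1 q * e3 q * w q)
  + s1 * s2 * b3 * (e1 q * e2 q * w q) + s1 * s2 * s3 * (e1 q * e2 q * e3 q * w q))).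
  rewrite !big_split /= -!mulr_sumr H0 H1 H2 H3 H12 H13 H23 H123; ring.
by move=> q _; ring.
Qed.

Definition bt (R : pzRingType) (l x : bool) (p : R) := if x == l then p else 1 - p.
Definition sg (R : pzRingType) (l x : bool) : R := if x == l then 1 else -1.

Lemma factor (R : comPzRingType) (l x b : bool) (p : R) :
  bt l x p + sg R l x * ((if b == l then 1 else 0) - p) = if b == x then 1 else 0.
Proof. by case: l; case: x; case: b; rewrite /bt /sg /=; ring. Qed.

Section Cls.
Variables (R : realFieldType) (Q : nat) (t ci cj ck : 'I_Q -> bool).

Lemma gam_sum (F : 'I_Q -> R) l : (0 < Qlab t l)%N ->
  (Qlab t l)%:R^-1 * \sum_q F q = 0 -> \sum_q F q = 0.
Proof.
move=> Hl /eqP; rewrite mulf_eq0 invr_eq0 pnatr_eq0 (negbTE (lt0n_neq0 Hl)) /=; exact/eqP.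
Qed.

Lemma sumw l : \sum_(q < Q) (if t q == l then 1 else 0) = (Qlab t l)%:R :> R.
Proof. by rewrite /Qlab card_sumR. Qed.

Lemma mom1 (c : 'I_Q -> bool) l : (0 < Qlab t l)%N ->
  \sum_q (ind R c l q - lacc R t c l) * (if t q == l then 1 else 0) = 0.
Proof.
move=> Hl.
have Qn0 : (Qlab t l)%:R != 0 :> R by rewrite pnatr_eq0 -lt0n.
have Hc : #|[set q | (c q == l) && (t q == l)]|%:R
   = \sum_q ind R c l q * (if t q == l then 1 else 0) :> R.
  rewrite card_sumR; apply: eq_bigr => q _; rewrite /ind.
  by case: (c q == l); case: (t q == l); rewrite ?mulr1 ?mulr0.
rewrite (eq_bigr (fun q => 1 * (ind R c l q * (if t q == l then 1 else 0))
   + (- lacc R t c l) * (if t q == l then 1 else 0))); last by move=> q _; rewrite mulrBl mul1r mulNr.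
rewrite big_split /= -!mulr_sumr sumw -Hc /lacc.
by field.
Qed.

Lemma cell x y z l : error_independent R t ci cj ck -> (0 < Qlab t l)%N ->
  \sum_q (if [&& ci q == x, cj q == y & ck q == z] then 1 else 0)
     * (if t q == l then 1 else 0)
  = (Qlab t l)%:R * bt l x (lacc R t ci l) * bt l y (lacc R t cj l)
      * bt l z (lacc R t ck l).
Proof.
move=> /(_ l) [G12 G13 G23 G123] Hl.
rewrite -(L3 _ _ _ (sg R l x) (sg R l y) (sg R l z) (sumw l) (mom1 ci Hl) (mom1 cj Hl) (mom1 ck Hl)
  (gam_sum Hl G12) (gam_sum Hl G13) (gam_sum Hl G23) (gam_sum Hl G123)).
apply: eq_bigr => q _.
case: (t q == l); rewrite ?mulr0 // !mulr1 /ind !factor.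
by case: (ci q == x); case: (cj q == y); case: (ck q == z); rewrite /= ?mulr1 ?mulr0 ?mul0r.
Qed.

End Cls.

Lemma core (R : realFieldType) (f : bool -> bool -> bool -> R)
  (A B ai aj ak bi bj bk pa : R) :
  (forall x y z, f x y z = A * bt la x ai * bt la y aj * bt la z ak
                         + B * bt lb x bi * bt lb y bj * bt lb z bk) ->
  pa = A -> A + B = 1 ->
  let fbi := f lb la la + f lb la lb + f lb lb la + f lb lb lb in
  let fbj := f la lb la + f la lb lb + f lb lb la + f lb lb lb in
  let fbk := f la la lb + f la lb lb + f lb la lb + f lb lb lb in
  let Dij := f lb lb la + f lb lb lb - fbi * fbj in
  let Dik := f lb la lb + f lb lb lb - fbi * fbk in
  let Djk := f la lb lb + f lb lb lb - fbj * fbk in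
  let Dijk := f lb lb lb - (fbi * fbj * fbk + fbi * Djk + fbj * Dik + fbk * Dij) in
  let alpha := Dijk ^+ 2 + 4 * Dij * Dik * Djk in
  let gamma := Dij * Dik * Djk in
  alpha * pa ^+ 2 - alpha * pa + gamma = 0 /\
  (alpha != 0 ->
     forall x : R, alpha * x ^+ 2 - alpha * x + gamma = 0 <-> (x = pa \/ x = 1 - pa)).
Proof.
move=> Hf HA HAB fbi fbj fbk Dij Dik Djk Dijk alpha gamma.
have HB : B = 1 - A by rewrite -HAB; ring.
set di := 1 - ai - bi; set dj := 1 - aj - bj; set dk := 1 - ak - bk.
have Ei : fbi = A * (1 - ai) + B * bi.
  by rewrite /fbi !Hf /bt /= HB; ring.
have Ej : fbj = A * (1 - aj) + B * bj.
  by rewrite /fbj !Hf /bt /= HB; ring.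
have Ek : fbk = A * (1 - ak) + B * bk.
  by rewrite /fbk !Hf /bt /= HB; ring.
have Eij : Dij = A * B * di * dj.
  by rewrite /Dij Ei Ej !Hf /bt /= /di /dj HB; ring.
have Eik : Dik = A * B * di * dk.
  by rewrite /Dik Ei Ek !Hf /bt /= /di /dk HB; ring.
have Ejk : Djk = A * B * dj * dk.
  by rewrite /Djk Ej Ek !Hf /bt /= /dj /dk HB; ring.
have Eijk : Dijk = A * B * (B - A) * di * dj * dk.
  by rewrite /Dijk Eij Eik Ejk Ei Ej Ek !Hf /bt /= /di /dj /dk HB; ring.
have key : forall x, alpha * x ^+ 2 - alpha * x + gamma = alpha * (x - A) * (x - (1 - A)).
  move=> x; rewrite /alpha /gamma Eijk Eij Eik Ejk HB; ring.
split; first by rewrite key HA subrr mulr0 mul0r.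
move=> Hal x; rewrite key HA; split.
  move/eqP; rewrite !mulf_eq0 (negbTE Hal) /= !subr_eq0.
  by case/orP => /eqP ->; [left | right].
by case=> ->; rewrite subrr ?mulr0 ?mul0r.
Qed.
End Helpers.

Theorem mainTheorem3 (R : realFieldType) (Q : nat) (t li lj lk : 'I_Q -> bool) :
  @error_independent R Q t li lj lk ->
  (0 < Qlab t la)%N -> (0 < Qlab t lb)%N ->
  let f := @freq R Q li lj lk in
  let fbi := f lb la la + f lb la lb + f lb lb la + f lb lb lb in
  let fbj := f la lb la + f la lb lb + f lb lb la + f lb lb lb in
  let fbk := f la la lb + f la lb lb + f lb la lb + f lb lb lb in
  let Dij := f lb lb la + f lb lb lb - fbi * fbj in
  let Dik := f lb la lb + f lb lb lb - fbi * fbk in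
  let Djk := f la lb lb + f lb lb lb - fbj * fbk in
  let Dijk := f lb lb lb - (fbi * fbj * fbk + fbi * Djk + fbj * Dik + fbk * Dij) in
  let alpha := Dijk ^+ 2 + 4 * Dij * Dik * Djk in
  let gamma := Dij * Dik * Djk in
  let pa := @prevalence R Q t la in
  alpha * pa ^+ 2 - alpha * pa + gamma = 0 /\
  (alpha != 0 ->
     forall x : R, alpha * x ^+ 2 - alpha * x + gamma = 0 <-> (x = pa \/ x = 1 - pa)).
Proof.
move=> H Ha Hb f.
have HN : (Qlab t la)%:R + (Qlab t lb)%:R = Q%:R :> R.
  rewrite -(sumw R t la) -(sumw R t lb) -big_split /=.
  rewrite (eq_bigr (fun _ => 1)); first by rewrite sumr_const card_ord.
  by move=> q _; case: (t q); rewrite /= ?addr0 ?add0r.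
have N0 : Q%:R != 0 :> R.
  by rewrite -HN -natrD pnatr_eq0 addn_eq0 negb_and (lt0n_neq0 Ha).
apply: (@core R f ((Qlab t la)%:R / Q%:R) ((Qlab t lb)%:R / Q%:R)
   (lacc R t li la) (lacc R t lj la) (lacc R t lk la)
   (lacc R t li lb) (lacc R t lj lb) (lacc R t lk lb)).
- move=> x y z; rewrite /f /freq card_sumR.
  rewrite (eq_bigr (fun q => (if [&& li q == x, lj q == y & lk q == z] then 1 else 0)
     * (if t q == la then 1 else 0) +
     (if [&& li q == x, lj q == y & lk q == z] then 1 else 0)
     * (if t q == lb then 1 else 0))); last first.
    by move=> q _; case: (t q); rewrite /= ?mulr1 ?mulr0 ?addr0 ?add0r.
  rewrite big_split /= (cell x y z H Ha) (cell x y z H Hb).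
  by field.
- by [].
- by rewrite -mulrDl HN divff.
Qed.
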